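(* For every integer $d\ge 1$, \[ \sum_{m=1}^{d} q^{\binom{m}{2}}(1-q^m) \begin{bmatrix}2d\\ d+m\end{bmatrix}_q=\frac{1-q^d}{1+q^d} \begin{bmatrix}2d\\ d\end{bmatrix}_q. \]
   Context: Notation: $(a;q)_n=(1-a)(1-aq)\cdots(1-aq^{n-1})$ and $\begin{bmatrix}n\\k\end{bmatrix}_q=\frac{(q;q)_n}{(q;q)_k(q;q)_{n-k}}$ for $n\ge k\ge0$ and $0$ otherwise. *)

(* Defs.v *)
From mathcomp Require Import all_boot all_order all_algebra fraction.
Set Implicit Arguments. Unset Strict Implicit. Unset Printing Implicit Defensive.
Import GRing.Theory.
Local Open Scope ring_scope.

Definition qpoch (R : nzRingType) (a q : R) (n : nat) : R :=
  \prod_(i < n) (1 - a * q ^+ i).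

Definition qbinom (F : fieldType) (q : F) (n k : nat) : F :=
  if (k <= n)%N then qpoch q q n / (qpoch q q k * qpoch q q (n - k)) else 0.

Definition RatFun := {fraction {poly rat}}.
Definition qvar : RatFun := FracField.tofrac ('X : {poly rat}).

(* Main.v *)
Require Import Defs.
From mathcomp Require Import all_boot all_order all_algebra fraction.
From mathcomp Require Import ring.
Local Open Scope ring_scope.
Import GRing.Theory.

Section Gen.
Variable F : fieldType.
Variable q : F.
Hypothesis hq : forall k, (0 < k)%N -> 1 - q ^+ k != 0.

Lemma qpochS j : qpoch q q j.+1 = qpoch q q j * (1 - q ^+ j.+1).
Proof. by rewrite /qpoch big_ord_recr /= exprS. Qed.

Lemma qpoch_neq0 j : qpoch q q j != 0.
Proof.
elim: j => [|j IH]; first by rewrite /qpoch big_ord0 oner_neq0.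
by rewrite qpochS mulf_neq0 // hq.
Qed.

Lemma qbinom_ratio n k : (0 < k)%N -> (k <= n)%N ->
  qbinom q n k.-1 * (1 - q ^+ (n - k).+1) = qbinom q n k * (1 - q ^+ k).
Proof.
case: k => [//|k] _ hk.
rewrite /qbinom /= hk (ltnW hk).
have -> : (n - k = (n - k.+1).+1)%N by rewrite subnS prednK // subn_gt0.
rewrite !qpochS.
have h1 := qpoch_neq0 k. have h2 := qpoch_neq0 (n - k.+1).
have h3 := @hq k.+1 isT. have h4 := @hq (n - k.+1).+1 isT.
field.
by rewrite h1 h2 h3 h4.
Qed.

Lemma main_gen d : (1 <= d)%N -> 1 + q ^+ d != 0 ->
  \sum_(1 <= m < d.+1)
     q ^+ 'C(m, 2) * (1 - q ^+ m) * qbinom q (2 * d) (d + m)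
  = (1 - q ^+ d) / (1 + q ^+ d) * qbinom q (2 * d) d.
Proof.
move=> hd1 hd.
pose T m := q ^+ 'C(m.+1, 2) * (1 - q ^+ (d - m)) / (1 + q ^+ d) * qbinom q (2 * d) (d + m).
have step : forall m, (m < d)%N ->
   q ^+ 'C(m.+1, 2) * (1 - q ^+ m.+1) * qbinom q (2 * d) (d + m.+1) = T m - T m.+1.
  move=> m hm.
  have R := @qbinom_ratio (2 * d)%N (d + m.+1)%N.
  rewrite /= addnS /= in R.
  have hle : (d + m < 2 * d)%N by rewrite mul2n -addnn ltn_add2l.
  have e : ((2 * d - (d + m).+1).+1 = d - m)%N.
    rewrite mul2n -addnn subnS subnDl prednK // subn_gt0 //.
  rewrite e in R. have R' := R isT hle.
  have eC : 'C(m.+2, 2) = ('C(m, 2) + m + m.+1)%N by rewrite !binS !bin1 bin0 addn1.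
  rewrite /T eC binS bin1 addnS.
  set B0 := qbinom q _ (d + m) in R' *. set B1 := qbinom q _ (d + m).+1 in R' *.
  move: R' hd; clearbody B0 B1.
  have [j hj] : exists j, d = (j + m.+1)%N by exists (d - m.+1)%N; rewrite subnK.
  rewrite hj. have -> : (j + m.+1 - m = j.+1)%N by rewrite addnS subSn ?leq_addl // addnK.
  rewrite addnK => R' hd.
  have hx := @hq j.+1 isT.
  have -> : B0 = B1 * (1 - q ^+ (j + m.+1 + m).+1) / (1 - q ^+ j.+1).
    by rewrite -R' mulfK.
  rewrite !exprS !exprD !exprS.
  field.
  move: hd hx; rewrite !exprD !exprS => -> -> //.
transitivity (\sum_(0 <= m < d) (T m - T m.+1)).
  rewrite big_add1 /=. apply: eq_big_nat => m /andP[_ hm]. by rewrite step.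
under eq_bigr do rewrite -opprB.
rewrite sumrN telescope_sumr // opprB /T subnn subn0 addn0 expr0 subrr.
by rewrite mul1r mulr0 !mul0r subr0.
Qed.
End Gen.

Lemma qvar_hq k : (0 < k)%N -> 1 - qvar ^+ k != 0.
Proof.
move=> hk; rewrite /qvar -tofracXn -tofrac1 -tofracB tofrac_eq0.
apply/eqP => /(congr1 (fun p : {poly rat} => p`_k)).
rewrite coefB coef1 coefXn eqxx coef0 (negbTE (lt0n_neq0 hk)) /= => /eqP.
by rewrite sub0r oppr_eq0 oner_eq0.
Qed.

Lemma qvar_hd k : (0 < k)%N -> 1 + qvar ^+ k != 0.
Proof.
move=> hk; rewrite /qvar -tofracXn -tofrac1 -tofracD tofrac_eq0.
apply/eqP => /(congr1 (fun p : {poly rat} => p`_k)).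
rewrite coefD coef1 coefXn eqxx coef0 (negbTE (lt0n_neq0 hk)) /= => /eqP.
by rewrite add0r oner_eq0.
Qed.

Theorem corollary1p5 (d : nat) : (1 <= d)%N ->
  \sum_(1 <= m < d.+1)
     qvar ^+ 'C(m, 2) * (1 - qvar ^+ m) * qbinom qvar (2 * d) (d + m)
  = (1 - qvar ^+ d) / (1 + qvar ^+ d) * qbinom qvar (2 * d) d.
Proof.
move=> hd; apply: main_gen => //; [exact: qvar_hq | exact: qvar_hd].
Qed.
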